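(* Let $S$ be a semidomain that is additively reduced, additively Furstenberg, and satisfies $\mathscr{A}_+(S)=S^\times$, and let $G$ be a torsion-free abelian group. Let $f=s_0x^{g_0}+s_1x^{g_1}\in S[G]$ with $s_0,s_1\in S\setminus\{0\}$ and $g_0>g_1$ in $G$. Then: (1) if $s_0\in S^\times$ or $s_1\in S^\times$, then $f$ is irreducible; (2) if $s_0\notin S^\times$ and $s_1\notin S^\times$, then $f$ is the sum of two irreducible elements of $S[G]$.
   Context: A semidomain is a subsemiring (containing $0$ and $1$) of an integral domain; $S^\times$ is the unit group of the multiplicative monoid $S\setminus\{0\}$. $S$ is additively reduced if $0$ is the only invertible element of $(S,+)$. An additive atom is a nonzero $a\in S$ with $a=b+c$ implying $b=0$ or $c=0$; $\mathscr{A}_+(S)$ is the set of additive atoms. $S$ is additively Furstenberg if every nonzero $s\in S$ equals $a+t$ with $a\in\mathscr{A}_+(S)$, $t\in S$. $G$ carries a fixed total order compatible with addition. $S[G]$ is the semidomain of formal finite sums $\sum_{g\in G}s_gx^g$ with polynomial operations. $f\in S[G]$ is irreducible if it is nonzero, a nonunit, and $f=pq$ implies $p$ or $q$ is a unit of $S[G]$. *)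

(* Defs.v *)
From HB Require Import structures.
From mathcomp Require Import all_boot all_order all_algebra.
Set Implicit Arguments. Unset Strict Implicit. Unset Printing Implicit Defensive.
Import Order.TTheory GRing.Theory.
Local Open Scope ring_scope.

(* A semidomain is modelled as a predicate S on an integral domain R that is
   closed under the semiring operations (contains 0, 1, closed under +, * ). *)

Section Semidomain.
Variables (R : idomainType) (S : semiringClosed R).

Definition unitS (x : R) : Prop :=
  x \in S /\ x != 0 /\ exists2 y, y \in S & x * y = 1.

Definition add_reduced : Prop :=
  forall x, x \in S -> (exists2 y, y \in S & x + y = 0) -> x = 0.

Definition add_atom (a : R) : Prop :=
  a \in S /\ a != 0 /\
  forall b c, b \in S -> c \in S -> a = b + c -> b = 0 \/ c = 0.

Definition add_furstenberg : Prop :=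
  forall s, s \in S -> s != 0 -> exists a t, add_atom a /\ t \in S /\ s = a + t.

Definition atoms_eq_units : Prop := forall x, add_atom x <-> unitS x.
End Semidomain.

Definition ordered_group (G : zmodType) (lt : rel G) : Prop :=
  [/\ (forall x, ~~ lt x x),
      (forall x y z, lt x y -> lt y z -> lt x z),
      (forall x y, x != y -> lt x y || lt y x) &
      (forall x y z, lt x y -> lt (x + z) (y + z))].

Definition torsion_free (G : zmodType) : Prop :=
  forall (g : G) (n : nat), g *+ n.+1 = 0 -> g = 0.

(* Formal finite sums sum_i r_i x^{g_i}, represented by a list of terms. *)
Section GroupAlgebra.
Variables (R : idomainType) (G : zmodType).

Definition gsum := seq (R * G).

Definition gcoef (p : gsum) (g : G) : R := \sum_(t <- p | t.2 == g) t.1.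

Definition gsum_eq (p q : gsum) : Prop := forall g, gcoef p g = gcoef q g.

Definition gadd (p q : gsum) : gsum := p ++ q.
Definition gmul (p q : gsum) : gsum :=
  [seq (t.1 * u.1, t.2 + u.2) | t <- p, u <- q].
Definition gzero : gsum := [::].
Definition gone : gsum := [:: (1, 0)].

Variable S : semiringClosed R.

Definition inSG (p : gsum) : Prop := forall g, gcoef p g \in S.

Definition unitSG (p : gsum) : Prop :=
  inSG p /\ exists q, inSG q /\ gsum_eq (gmul p q) gone.

Definition irreducibleSG (f : gsum) : Prop :=
  [/\ inSG f, ~ gsum_eq f gzero, ~ unitSG f &
      forall p q, inSG p -> inSG q -> gsum_eq f (gmul p q) -> unitSG p \/ unitSG q].
End GroupAlgebra.

(* Main.v *)
Require Import Defs.
From mathcomp Require Import all_boot all_order all_algebra.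
From mathcomp Require Import ring.
From Stdlib Require Import Classical.
Import GRing.Theory.
Local Open Scope ring_scope.
Set Implicit Arguments. Unset Strict Implicit.
Lemma sum_pick (R : nmodType) (I : eqType) (K : seq I) (x : I) (F : I -> R) :
  uniq K -> x \in K -> \sum_(g <- K) (if g == x then F g else 0) = F x.
Proof.
move=> uK xK; rewrite (bigD1_seq x) //= eqxx big1 ?addr0 // => i /negbTE ->; by [].
Qed.

Lemma regroup (R : idomainType) (G : zmodType) (p : gsum R G) (F : G -> R) (K : seq G) :
  uniq K -> {subset map snd p <= K} ->
  \sum_(t <- p) t.1 * F t.2 = \sum_(g <- K) gcoef p g * F g.
Proof.
move=> uK sK; rewrite /gcoef; symmetry.
under eq_bigr => g _ do rewrite big_distrl /= big_mkcond /=.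
rewrite exchange_big /=; symmetry; apply: eq_big_seq => t tp.
rewrite -(@sum_pick _ _ K t.2 (fun g => t.1 * F g) uK); last by apply: sK; apply: map_f.
by apply: eq_bigr => g _; rewrite eq_sym; case: ifP.
Qed.

Lemma coef_mulL (R : idomainType) (G : zmodType) (p q : gsum R G) h :
  gcoef (gmul p q) h = \sum_(t <- p) t.1 * gcoef q (h - t.2).
Proof.
rewrite /gcoef /gmul big_mkcond big_allpairs_dep /=; apply: eq_bigr => t _.
rewrite big_distrr /= [RHS]big_mkcond /=; apply: eq_bigr => u _.
have -> : (u.2 == h - t.2) = (t.2 + u.2 == h).
  by rewrite eq_sym subr_eq addrC eq_sym.
by case: ifP.
Qed.

Lemma coef_mulR (R : idomainType) (G : zmodType) (p q : gsum R G) h :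
  gcoef (gmul p q) h = \sum_(u <- q) gcoef p (h - u.2) * u.1.
Proof.
rewrite /gcoef /gmul big_mkcond big_allpairs_dep /= exchange_big /=; apply: eq_bigr => u _.
rewrite big_distrl /= [RHS]big_mkcond /=; apply: eq_bigr => t _.
have -> : (t.2 == h - u.2) = (t.2 + u.2 == h).
  by rewrite eq_sym subr_eq eq_sym.
by case: ifP.
Qed.

Lemma gmulC (R : idomainType) (G : zmodType) (p q : gsum R G) :
  gsum_eq (gmul p q) (gmul q p).
Proof.
move=> h; rewrite coef_mulR coef_mulL; apply: eq_bigr => t _; exact: mulrC.
Qed.

Lemma coef_notin (R : idomainType) (G : zmodType) (p : gsum R G) g :
  g \notin map snd p -> gcoef p g = 0.
Proof.
move=> gn; rewrite /gcoef big1_seq // => t /andP [/eqP e tp].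
by case/negP: gn; rewrite -e; apply: map_f.
Qed.

Lemma coef_mulK (R : idomainType) (G : zmodType) (p q : gsum R G) h (K : seq G) :
  uniq K -> {subset map snd p <= K} ->
  gcoef (gmul p q) h = \sum_(g <- K) gcoef p g * gcoef q (h - g).
Proof. by move=> uK sK; rewrite coef_mulL (@regroup _ _ p (fun g => gcoef q (h - g)) K uK sK). Qed.

Lemma gcoef2 (R : idomainType) (G : zmodType) (a b : R) (x y g : G) :
  gcoef [:: (a, x); (b, y)] g = (if x == g then a else 0) + (if y == g then b else 0).
Proof.
rewrite /gcoef !big_cons big_nil /=.
by case: (x == g); case: (y == g); rewrite ?addr0 ?add0r.
Qed.

Lemma gcoef1 (R : idomainType) (G : zmodType) (a : R) (x g : G) :
  gcoef [:: (a, x)] g = (if x == g then a else 0).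
Proof. by rewrite /gcoef !big_cons big_nil /=; case: (x == g); rewrite ?addr0. Qed.

Definition mono (R : idomainType) (G : zmodType) (p : gsum R G) a :=
  forall g, gcoef p g != 0 -> g = a.

Lemma sub_undup (G : zmodType) (a : G) (s : seq G) : {subset s <= undup (a :: s)}.
Proof. by move=> x xs; rewrite mem_undup in_cons xs orbT. Qed.

Lemma prod_pt (R : idomainType) (S : semiringClosed R) (G : zmodType) (p q : gsum R G) a b :
  add_reduced S -> inSG S p -> inSG S q -> gcoef p a != 0 -> gcoef q b != 0 ->
  gcoef (gmul p q) (a + b) != 0.
Proof.
move=> hred Sp Sq pa qb.
rewrite (coef_mulK q (a + b) (undup_uniq (a :: map snd p)) (@sub_undup G a _)).
rewrite (bigD1_seq a); [ | by rewrite mem_undup mem_head | exact: undup_uniq]; rewrite /=.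
rewrite (addrC a b) addrK.
apply/negP => /eqP H.
suff: gcoef p a * gcoef q b = 0 by move/eqP; rewrite (negbTE (mulf_neq0 pa qb)).
apply: hred; first exact: rpredM.
exists (\sum_(i <- undup (a :: map snd p) | i != a) gcoef p i * gcoef q (b + a - i)) => //.
by apply: rpred_sum => i _; apply: rpredM.
Qed.

Lemma supp2 (R : idomainType) (G : zmodType) (s0 s1 : R) (g0 g1 h : G) :
  gcoef [:: (s0, g0); (s1, g1)] h != 0 -> h = g0 \/ h = g1.
Proof.
rewrite gcoef2; case: (eqVneq g0 h) => [->|_]; first by left.
by case: (eqVneq g1 h) => [->|_]; [right | rewrite addr0 eqxx].
Qed.

Lemma two_pts (R : idomainType) (G : zmodType) (p : gsum R G) :
  ~ (exists a, mono p a) -> exists a1 a2, a1 != a2 /\ gcoef p a1 != 0 /\ gcoef p a2 != 0.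
Proof.
move=> H; apply: NNPP => H2; apply: H.
case: (classic (exists a, gcoef p a != 0)) => [[a Ha]|Hn].
  exists a => g Hg; apply: NNPP => ne; apply: H2; exists g, a; split => //.
  by apply/eqP.
by exists 0 => g Hg; exfalso; apply: Hn; exists g.
Qed.

Lemma ord_pts (R : idomainType) (G : zmodType) (lt : rel G) (p : gsum R G) :
  ordered_group lt -> ~ (exists a, mono p a) ->
  exists a1 a2, lt a1 a2 /\ gcoef p a1 != 0 /\ gcoef p a2 != 0.
Proof.
case=> irr tr tot comp /two_pts [a1 [a2 [ne [h1 h2]]]].
by case/orP: (tot _ _ ne) => l; [exists a1, a2 | exists a2, a1].
Qed.

Lemma pigeon (G : zmodType) (lt : rel G) (g0 g1 c1 c2 c3 : G) :
  ordered_group lt -> lt c1 c2 -> lt c2 c3 -> lt c1 c3 ->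
  (c1 = g0 \/ c1 = g1) -> (c2 = g0 \/ c2 = g1) -> (c3 = g0 \/ c3 = g1) -> False.
Proof.
case=> irr _ _ _ l12 l23 l13 [] e1 [] e2 [] e3; subst c1 c2 c3;
by [move: l12; rewrite (negbTE (irr _)) | move: l23; rewrite (negbTE (irr _))
   | move: l13; rewrite (negbTE (irr _))].
Qed.

Lemma dichotomy (R : idomainType) (S : semiringClosed R) (G : zmodType) (lt : rel G)
  (s0 s1 : R) (g0 g1 : G) (p q : gsum R G) :
  add_reduced S -> ordered_group lt -> inSG S p -> inSG S q ->
  gsum_eq [:: (s0, g0); (s1, g1)] (gmul p q) ->
  (exists a, mono p a) \/ (exists a, mono q a).
Proof.
move=> hred og Sp Sq Hf; apply: NNPP => /not_or_and [np nq].
have [x1 [x2 [lx [px1 px2]]]] := ord_pts og np.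
have [y1 [y2 [ly [qy1 qy2]]]] := ord_pts og nq.
have og' := og; case: og' => irr tr tot comp.
have l12 : lt (x1 + y1) (x1 + y2) by rewrite ![x1 + _]addrC; apply: comp.
have l23 : lt (x1 + y2) (x2 + y2) by apply: comp.
have l13 := tr _ _ _ l12 l23.
have P a b : gcoef p a != 0 -> gcoef q b != 0 -> a + b = g0 \/ a + b = g1.
  by move=> pa qb; apply: (@supp2 R G s0 s1); rewrite Hf; exact: (prod_pt hred Sp Sq pa qb).
exact: (pigeon og l12 l23 l13 (P _ _ px1 qy1) (P _ _ px1 qy2) (P _ _ px2 qy2)).
Qed.

Lemma mono_coef (R : idomainType) (G : zmodType) (p q : gsum R G) a :
  mono p a -> forall h, gcoef (gmul p q) h = gcoef p a * gcoef q (h - a).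
Proof.
move=> Hm h.
rewrite (coef_mulK q h (undup_uniq (a :: map snd p)) (@sub_undup G a _)).
rewrite (bigD1_seq a); [ | by rewrite mem_undup mem_head | exact: undup_uniq]; rewrite /= big1 ?addr0 // => g ga.
case: (eqVneq (gcoef p g) 0) => [->|/Hm e]; first by rewrite mul0r.
by rewrite e eqxx in ga.
Qed.

Lemma mono_unit (R : idomainType) (S : semiringClosed R) (G : zmodType) (p q : gsum R G) a :
  inSG S p -> inSG S q -> mono p a -> (exists h, unitS S (gcoef (gmul p q) h)) ->
  unitSG S p.
Proof.
move=> Sp Sq Hm [h [_ [_ [y yS hy]]]].
rewrite (mono_coef q Hm) in hy.
split => //; exists [:: (gcoef q (h - a) * y, - a)]; split.
  by move=> g; rewrite gcoef1; case: ifP => _; [apply: rpredM | apply: rpred0].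
move=> k; rewrite (mono_coef _ Hm) gcoef1 /gone gcoef1.
have -> : (- a == k - a) = (0 == k) by rewrite eq_sym subr_eq addNr eq_sym.
by case: ifP => _; [rewrite mulrA | rewrite mulr0].
Qed.

Lemma gcoef_cat (R : idomainType) (G : zmodType) (p q : gsum R G) g :
  gcoef (p ++ q) g = gcoef p g + gcoef q g.
Proof. by rewrite /gcoef big_cat. Qed.

Lemma part1 (R : idomainType) (S : semiringClosed R) (G : zmodType) (lt : rel G)
  (s0 s1 : R) (g0 g1 : G) :
  add_reduced S -> ordered_group lt ->
  s0 \in S -> s0 != 0 -> s1 \in S -> s1 != 0 -> lt g1 g0 ->
  (unitS S s0 \/ unitS S s1) -> irreducibleSG S [:: (s0, g0); (s1, g1)].
Proof.
move=> hred og S0 n0 S1 n1 l10 hu.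
have og' := og; case: og' => irr tr tot comp.
have ne10 : (g1 == g0) = false.
  by apply/negP => /eqP e; move: l10; rewrite e (negbTE (irr _)).
have ne01 : (g0 == g1) = false by rewrite eq_sym.
have c0 : gcoef [:: (s0, g0); (s1, g1)] g0 = s0 by rewrite gcoef2 eqxx ne10 addr0.
have c1 : gcoef [:: (s0, g0); (s1, g1)] g1 = s1 by rewrite gcoef2 eqxx ne01 add0r.
have Sf : inSG S [:: (s0, g0); (s1, g1)].
  move=> g; rewrite gcoef2; apply: rpredD; case: ifP => _ //; exact: rpred0.
split => //.
- move/(_ g0); rewrite c0 /gcoef big_nil => e; by rewrite e eqxx in n0.
- case=> _ [q [Sq Hq]].
  case: (classic (exists b, gcoef q b != 0)) => [[b Hb]|Hn].
    have h0 := prod_pt hred Sf Sq (a := g0) (b := b).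
    have h1 := prod_pt hred Sf Sq (a := g1) (b := b).
    rewrite c0 Hq /gone gcoef1 in h0; rewrite c1 Hq /gone gcoef1 in h1.
    move: (h0 n0 Hb) (h1 n1 Hb).
    case: (eqVneq 0 (g0 + b)) => [e0|]; last by rewrite eqxx.
    case: (eqVneq 0 (g1 + b)) => [e1|]; last by rewrite eqxx.
    move=> _ _; move: e1; rewrite e0 => /addIr e.
    by move: ne10; rewrite e eqxx.
  have Hz : forall g, gcoef q g = 0.
    move=> g; apply/eqP; apply/negPn/negP => H; apply: Hn; by exists g.
  have := Hq 0; rewrite gmulC /gone gcoef1 eqxx.
  have sq : {subset map snd q <= undup (map snd q)} by move=> x; rewrite mem_undup.
  rewrite (coef_mulK _ _ (undup_uniq (map snd q)) sq).
  by rewrite big1 => [/eqP|g _]; [rewrite eq_sym oner_eq0 | rewrite Hz mul0r].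
- move=> p q Sp Sq Hf.
  have hu' : forall p q : gsum R G, gsum_eq [:: (s0, g0); (s1, g1)] (gmul p q) ->
      exists h, unitS S (gcoef (gmul p q) h).
    move=> p' q' Hf'; case: hu => hu; [exists g0 | exists g1]; by rewrite -Hf' ?c0 ?c1.
  case: (dichotomy hred og Sp Sq Hf) => [[a Ha]|[a Ha]].
    by left; apply: (mono_unit Sp Sq Ha); apply: hu'.
  right; apply: (mono_unit Sq Sp Ha); apply: hu' => g; rewrite Hf; exact: gmulC.
Qed.
Unset Implicit Arguments.

Theorem lemma3p4 (R : idomainType) (S : semiringClosed R)
  (G : zmodType) (lt : rel G) :
  add_reduced S -> add_furstenberg S -> atoms_eq_units S ->
  torsion_free G -> ordered_group lt ->
  forall (s0 s1 : R) (g0 g1 : G),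
    s0 \in S -> s0 != 0 -> s1 \in S -> s1 != 0 -> lt g1 g0 ->
    let f : gsum R G := [:: (s0, g0); (s1, g1)] in
    ((unitS S s0 \/ unitS S s1) -> irreducibleSG S f) /\
    (~ unitS S s0 -> ~ unitS S s1 ->
       exists p q : gsum R G,
         [/\ irreducibleSG S p, irreducibleSG S q & gsum_eq f (gadd p q)]).
Proof.
move=> hred hfur hat _ og s0 s1 g0 g1 S0 n0 S1 n1 l10 f; split.
  by move=> hu; apply: (part1 hred og)...
move=> u0 u1.
have [a0 [t0 [A0 [T0 E0]]]] := hfur s0 S0 n0.
have [a1 [t1 [A1 [T1 E1]]]] := hfur s1 S1 n1.
have U0 := (hat a0).1 A0; have U1 := (hat a1).1 A1.
case: A0 => SA0 [nA0 _]; case: A1 => SA1 [nA1 _].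
have nt0 : t0 != 0 by apply/eqP => e; apply: u0; rewrite E0 e addr0.
have nt1 : t1 != 0 by apply/eqP => e; apply: u1; rewrite E1 e addr0.
exists [:: (a0, g0); (t1, g1)], [:: (t0, g0); (a1, g1)]; split.
- by apply: (part1 hred og) => //; left.
- by apply: (part1 hred og) => //; right.
- move=> g; rewrite /gadd gcoef_cat /f !gcoef2 E0 E1.
  case: (g0 == g); case: (g1 == g); rewrite ?addr0 ?add0r //.
  all: ring.
Qed.
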